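(* Let $p$ be a prime, $R$ an $F$-pure ring of characteristic $p$, and $f\in R$ a non-zero non-unit. Let $d\ge1$ be an integer and $\alpha\in[0,1]$ with $(p^d-1)\alpha\in\mathbb{N}$. If the inclusion $R\cdot f^{\langle\alpha\rangle_d}\subseteq R^{1/p^d}$ splits over $R$, then $\alpha\le\operatorname{fpt}(f)$.
   Context: A ring $R$ of characteristic $p$ is $F$-pure if $R\subseteq R^{1/p}$ splits as a map of $R$-modules. Roots and splitting. $R^{1/p^e}$ is the ring of formal $p^e$-th roots of elements of $R$, containing $R$ via $r\mapsto(r^{p^e})^{1/p^e}$. For $a\in\mathbb{N}$, $f^{a/p^e}:=(f^a)^{1/p^e}$. The inclusion $R\cdot t\subseteq R^{1/p^e}$ splits if some $R$-linear $\theta:R^{1/p^e}\to R$ has $\theta(t)=1$. $F$-pure threshold. $(R,f^\lambda)$ is $F$-pure if $R\cdot f^{\lfloor (p^e-1)\lambda\rfloor/p^e}\subseteq R^{1/p^e}$ splits for all $e\ge1$. $\operatorname{fpt}(f)$ is the supremum of $\lambda\ge0$ with $(R,f^\lambda)$ $F$-pure. Truncations. For $\alpha\in(0,1]$ with non-terminating base $p$ expansion $\alpha=\sum_{e\ge1}a_e/p^e$ (digits $0\le a_e\le p-1$, not all eventually zero), $\langle\alpha\rangle_e:=\sum_{i=1}^e a_i/p^i\in\frac1{p^e}\mathbb{N}$, so that $f^{\langle\alpha\rangle_e}\in R^{1/p^e}$. By convention $\langle0\rangle_e=0$. *)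

(* Defs.v *)
From HB Require Import structures.
From mathcomp Require Import all_boot all_order all_algebra.
From mathcomp Require Import all_classical all_reals all_analysis.
From mathcomp Require Import Rstruct Rstruct_topology.
From Stdlib Require Import ClassicalEpsilon.
Set Implicit Arguments. Unset Strict Implicit. Unset Printing Implicit Defensive.
Import Order.TTheory GRing.Theory Num.Theory.
Local Open Scope ring_scope.
Local Open Scope classical_set_scope.
Local Open Scope ring_scope.

Notation real := Rdefinitions.R.

(* R^{1/q} (q = p^e) is identified with the ring A itself via x^{1/q} <-> x;
   its additive structure is that of A and the R-module structure is
   r . x^{1/q} = (r^q x)^{1/q}.  An R-linear map theta : R^{1/q} -> R is thus
   an additive map theta : A -> A with theta (r^q x) = r theta(x).
   [splits_root A q t] : the inclusion R . t^{1/q} ⊆ R^{1/q} splits, i.e.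
   some R-linear theta : R^{1/q} -> R has theta(t^{1/q}) = 1. *)
Definition splits_root (A : comNzRingType) (q : nat) (t : A) : Prop :=
  exists theta : A -> A,
    [/\ (forall x y, theta (x + y) = theta x + theta y),
        (forall r x, theta (r ^+ q * x) = r * theta x) &
        theta t = 1].

Arguments splits_root : clear implicits.

Definition Fpure (A : comNzRingType) (p : nat) : Prop := splits_root A p 1.

(* (R, f^lambda) is F-pure: for all e >= 1, R . f^{floor((p^e-1) lambda)/p^e}
   ⊆ R^{1/p^e} splits (lambda >= 0, so truncn is the floor). *)
Definition pair_Fpure (A : comNzRingType) (p : nat) (f : A) (lambda : real) : Prop :=
  forall e : nat, (0 < e)%N ->
    splits_root A (p ^ e) (f ^+ Num.truncn ((p ^ e - 1)%:R * lambda)).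

Arguments pair_Fpure : clear implicits.
Definition fpt (A : comNzRingType) (p : nat) (f : A) : \bar real :=
  ereal_sup [set (lambda%:E)%E | lambda in
               [set lambda : real | 0 <= lambda /\ pair_Fpure A p f lambda]].

(* a is a non-terminating base-p expansion of alpha: alpha = sum_{e>=1} a_e/p^e,
   digits 0 <= a_e <= p-1, not all eventually zero (a 0 is irrelevant). *)
Definition nonterm_expansion (p : nat) (alpha : real) (a : nat -> nat) : Prop :=
  [/\ (forall i, (a i < p)%N),
      (forall N, exists i, (N <= i)%N /\ a i <> 0%N) &
      ((fun n : nat => \sum_(1 <= i < n.+1) (a i)%:R / (p%:R ^+ i : real))
         @ \oo --> alpha)].

Definition digits (p : nat) (alpha : real) : nat -> nat :=
  epsilon (inhabits (fun _ => 0%N)) (nonterm_expansion p alpha).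

(* <alpha>_e = trunc_num p alpha e / p^e, so f^{<alpha>_e} = (f^{trunc_num})^{1/p^e};
   convention <0>_e = 0. *)
Definition trunc_num (p : nat) (alpha : real) (e : nat) : nat :=
  if alpha == 0 then 0%N
  else \sum_(1 <= i < e.+1) (digits p alpha i * p ^ (e - i))%N.
Arguments fpt : clear implicits.
Arguments Fpure : clear implicits.

(* Main.v *)
Require Import Defs.
From HB Require Import structures.
From mathcomp Require Import all_boot all_order all_algebra.
From mathcomp Require Import all_classical all_reals all_analysis.
From mathcomp Require Import Rstruct Rstruct_topology.
From mathcomp Require Import lra ring zify.
From Stdlib Require Import Classical ClassicalEpsilon.
Import Order.TTheory GRing.Theory Num.Theory.
Local Open Scope ring_scope.

Definition Sp (p : nat) (a : nat -> nat) (n : nat) : real :=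
  \sum_(1 <= i < n.+1) (a i)%:R / (p%:R ^+ i : real).

Lemma SpS p a n : Sp p a n.+1 = Sp p a n + (a n.+1)%:R / (p%:R ^+ n.+1).
Proof. by rewrite /Sp big_nat_recr. Qed.

Lemma Sp_bound p a m : (1 < p)%N -> (forall i, (a i < p)%N) ->
  forall j, Sp p a (m + j) <= Sp p a m + 1 / p%:R ^+ m - 1 / p%:R ^+ (m + j).
Proof.
move=> p1 ha; elim=> [|j IH]; first by rewrite addn0; lra.
have pp : (0 : real) < p%:R by rewrite ltr0n; lia.
have hp : (0 : real) < p%:R ^+ (m + j) by rewrite exprn_gt0.
rewrite addnS SpS.
set X := Sp p a (m + j) in IH *. set U := 1 / _ ^+ m in IH *. set V := 1 / _ ^+ (m + j) in IH *. set W := 1 / _ ^+ (m + j).+1. set Z := _ / _ ^+ (m + j).+1.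
have ai : ((a (m + j).+1)%:R : real) <= p%:R - 1.
  have : ((a (m + j).+1).+1 <= p)%N := ha _.
  by rewrite -(ler_nat real) -natr1; lra.
suff: Z <= V - W by lra.
rewrite /Z /V /W.
have e : 1 / p%:R ^+ (m + j) - 1 / p%:R ^+ (m + j).+1 = ((p%:R - 1) / p%:R ^+ (m + j).+1 : real).
  rewrite exprS; field; apply/andP; split; rewrite gt_eqF //.
by rewrite e; apply: ler_wpM2r => //; rewrite invr_ge0 exprn_ge0 // ltW.
Qed.

Lemma nonterm_le p (al : real) a : (1 < p)%N -> nonterm_expansion p al a ->
  forall m, al <= Sp p a m + 1 / p%:R ^+ m.
Proof.
move=> p1 [ha _ hc] m.
apply: (cvgr_to_le hc).
exists m => // n /= hmn.
have pp : (0 : real) < p%:R by rewrite ltr0n; lia.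
rewrite -(subnKC hmn); move: (Sp_bound p a m p1 ha (n - m)).
have : 0 <= 1 / (p%:R : real) ^+ (m + (n - m)) by rewrite divr_ge0 // exprn_ge0 // ltW.
rewrite /Sp; lra.
Qed.

Lemma trunc_sum p a d : (0 < p)%N ->
  ((\sum_(1 <= i < d.+1) (a i * p ^ (d - i))%N)%:R : real) = p%:R ^+ d * Sp p a d.
Proof.
move=> p0; rewrite natr_sum /Sp mulr_sumr; apply: eq_big_nat => i /andP[h1 h2].
have pu : (p%:R : real) \is a GRing.unit by rewrite unitfE pnatr_eq0 -lt0n.
rewrite natrM natrX (exprB h2 pu).
rewrite !exprS; field.
by apply/andP; split; rewrite ?expf_neq0 // pnatr_eq0 -lt0n.
Qed.

Lemma exists_c (x : real) : 0 < x -> exists m : nat, (m%:R < x <= m.+1%:R).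
Proof.
move=> x0; have /andP[h1 h2] := truncn_itv (ltW x0).
case: (eqVneq ((Num.truncn x)%:R) x) => hx.
  have t0 : (0 < Num.truncn x)%N.
    rewrite lt0n; apply/negP => /eqP t0; move: hx; rewrite t0 => hx.
    by move: x0; rewrite -hx ltxx.
  exists (Num.truncn x).-1; rewrite prednK //; apply/andP; split; last by rewrite hx.
  by rewrite -[X in _ < X]hx ltr_nat prednK.
exists (Num.truncn x); apply/andP; split; last exact: ltW.
by rewrite lt_neqAle hx h1.
Qed.

Lemma exists_expansion p (al : real) : (1 < p)%N -> 0 < al <= 1 ->
  exists a, nonterm_expansion p al a.
Proof.
move=> p1 /andP[al0 al1].
have pp : (0 : real) < p%:R by rewrite ltr0n; lia.
have hpos n : 0 < (p%:R ^+ n : real) * al by rewrite mulr_gt0 // exprn_gt0.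
have hc n := exists_c _ (hpos n).
pose c n := xchoose (hc n).
have cP n : (c n)%:R < p%:R ^+ n * al <= (c n).+1%:R := xchooseP (hc n).
have c0 : c 0 = 0%N.
  have /andP[h _] := cP 0; move: h; rewrite expr0 mul1r => h.
  have : ((c 0)%:R : real) < 1 by lra.
  by rewrite ltrn1; case: (c 0).
have c_le n : (p * c n <= c n.+1)%N.
  have /andP[b1 _] := cP n; have /andP[_ b2] := cP n.+1.
  rewrite -ltnS -(ltr_nat real) natrM; apply: lt_le_trans b2.
  by rewrite exprS -mulrA ltr_pM2l.
have c_lt n : (c n.+1 < p * (c n).+1)%N.
  have /andP[b1 _] := cP n.+1; have /andP[_ b2] := cP n.
  rewrite -(ltr_nat real) natrM; apply: lt_le_trans b1 _.
  by rewrite exprS -mulrA ler_pM2l.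
pose a i := (c i - p * c i.-1)%N.
have Sc n : Sp p a n = (c n)%:R / p%:R ^+ n.
  elim: n => [|n IH]; first by rewrite /Sp big_geq // c0 mul0r.
  rewrite SpS IH /a /= natrB // natrM exprS; field.
  by apply/andP; split; rewrite ?expf_neq0 // gt_eqF.
have hcv : ((fun n => \sum_(1 <= i < n.+1) (a i)%:R / (p%:R ^+ i : real)) @ \oo --> al)%classic.
  apply/(cvgrPdist_le (V := real^o)) => e e0.
  exists (Num.truncn e^-1).+1 => // n /= hN.
  have hn : 1 / p%:R ^+ n <= e.
    have Pn : (0 : real) < p%:R ^+ n by rewrite exprn_gt0.
    rewrite ler_pdivrMr // -[X in X <= _](mulfV (lt0r_neq0 e0)) ler_pM2l //.
    have h1 : e^-1 < (Num.truncn e^-1).+1%:R.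
      by rewrite real_truncnS_gt // num_real.
    apply: (ltW (lt_le_trans h1 _)).
    have h2 : (n < p ^ n)%N by apply: ltn_expl.
    rewrite -natrX ler_nat; lia.
  change (`|al - Sp p a n| <= e); rewrite Sc.
  have Pn : (0 : real) < p%:R ^+ n by rewrite exprn_gt0.
  have /andP[b1 b2] := cP n.
  have e1 : al - (c n)%:R / p%:R ^+ n = (p%:R ^+ n * al - (c n)%:R) / p%:R ^+ n.
    by field; rewrite gt_eqF.
  rewrite e1 ger0_norm; last by rewrite divr_ge0 ?ltW // subr_gt0.
  apply: le_trans hn; apply: ler_wpM2r; first by rewrite invr_ge0 ltW.
  move: b2; rewrite -natr1; lra.
exists a; split => //.
- case=> [|i]; rewrite /a /=; first by rewrite c0; lia.
  by move: (c_lt i); rewrite mulnS; lia.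
- move=> N; apply: NNPP => hN.
  have h0 i : (N <= i)%N -> a i = 0%N.
    move=> hi; case: (eqVneq (a i) 0%N) => // ne; exfalso; apply: hN.
    by exists i; split => //; apply/eqP.
  have hconst j : Sp p a (N + j) = Sp p a N.
    elim: j => [|j IH]; first by rewrite addn0.
    by rewrite addnS SpS IH h0 ?mul0r ?addr0 //; lia.
  have : al <= Sp p a N.
    apply: (cvgr_to_le hcv); exists N => // n /= hn.
    by change (Sp p a n <= Sp p a N); rewrite -(subnKC hn) hconst.
  have Pn : (0 : real) < p%:R ^+ N by rewrite exprn_gt0.
  rewrite Sc ler_pdivlMr //; have /andP[b1 _] := cP N; lra.
Qed.
Lemma splits_iter (A : comUnitRingType) (q k : nat) (f : A) :
  splits_root A q (f ^+ k) ->
  forall n, splits_root A (q ^ n) (f ^+ (k * \sum_(i < n) q ^ i)%N).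
Proof.
move=> [th [thD thL th1]] n; elim: n => [|n [tn [tnD tnL tn1]]].
  exists id; split=> //; last by rewrite big_ord0 muln0 expr0.
exists (fun x => th (tn x)); split.
- by move=> x y; rewrite tnD thD.
- by move=> r x; rewrite expnS exprM tnL thL.
- rewrite big_ord_recr /= mulnDr addnC exprD exprM tnL tn1 mulr1.
  by rewrite th1.
Qed.

Lemma splits_down (A : comUnitRingType) (p E e a b : nat) (f : A) :
  prime p -> p \in [pchar A] ->
  splits_root A (p ^ E) (f ^+ a) -> (e <= E)%N -> (b * p ^ (E - e) <= a)%N ->
  splits_root A (p ^ e) (f ^+ b).
Proof.
move=> pp pc [th [thD thL th1]] eE ba.
have hn : ([pchar A]).-nat (p ^ (E - e))%N by rewrite pnatX pnatE ?pc.
exists (fun x => th (f ^+ (a - b * p ^ (E - e)) * x ^+ (p ^ (E - e)))); split.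
- by move=> x y; rewrite exprDn_pchar // mulrDr thD.
- move=> r x; rewrite exprMn -exprM -expnD subnKC // mulrCA thL //.
- by rewrite -exprM -exprD subnK // th1.
Qed.

Theorem mainTheorem7 (p : nat) (A : comUnitRingType) (f : A) (d : nat) (alpha : real) :
  prime p -> p \in [pchar A] -> Fpure A p ->
  f != 0 -> f \isn't a GRing.unit ->
  (1 <= d)%N -> 0 <= alpha <= 1 ->
  (exists k : nat, (p ^ d - 1)%:R * alpha = k%:R) ->
  splits_root A (p ^ d) (f ^+ trunc_num p alpha d) ->
  (alpha%:E <= fpt A p f)%E.
Proof.
move=> pp pc _ _ _ d1 /andP[a0 a1] [k hk] hs.
have p1 : (1 < p)%N := prime_gt1 pp.
have p0 : (0 : real) < p%:R by rewrite ltr0n; lia.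
have q1 : (1 < p ^ d)%N by have := ltn_expl d p1; lia.
have hkT : (k <= trunc_num p alpha d)%N.
  case: (eqVneq alpha 0) => [a00|an0].
    move: hk; rewrite a00 mulr0 => /esym/eqP; rewrite pnatr_eq0 => /eqP ->.
    by [].
  have apos : 0 < alpha by rewrite lt_neqAle eq_sym an0.
  have [a ha] := exists_expansion p alpha p1 (introT andP (conj apos a1)).
  have hd : nonterm_expansion p alpha (digits p alpha).
    exact: (epsilon_spec (inhabits (fun _ => 0%N)) (nonterm_expansion p alpha) (ex_intro _ a ha)).
  rewrite /trunc_num (negbTE an0).
  have hT := trunc_sum p (digits p alpha) d (ltnW p1).
  have hb := nonterm_le p alpha (digits p alpha) p1 hd d.
  rewrite -ltnS -(ltr_nat real) -natr1 hT -hk natrB ?natrX; last by lia.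
  set P := (p%:R ^+ d : real) in hb *.
  set S := Sp p (digits p alpha) d in hb *.
  have Pp : 0 < P by rewrite exprn_gt0.
  have : P * alpha <= P * S + 1.
    have := hb; rewrite -(ler_pM2l Pp) mulrDr mul1r mulfV ?lt0r_neq0 //.
  set PS := P * S; set Pa := P * alpha.
  have -> : (P - 1) * alpha = Pa - alpha by rewrite /Pa; ring.
  lra.
have hk' : splits_root A (p ^ d) (f ^+ k).
  by apply: (@splits_down _ _ _ _ _ _ _ pp pc hs (leqnn d)); rewrite subnn expn0 muln1.
have hF : pair_Fpure A p f alpha.
  move=> e e1.
  have hi := @splits_iter _ _ _ _ hk' e; rewrite -expnM in hi.
  apply: (@splits_down _ _ _ _ _ _ _ pp pc hi); first by rewrite leq_pmull.
  set b := Num.truncn _.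
  have hb : b%:R <= (p ^ e - 1)%:R * alpha.
    by rewrite truncn_le mulr_ge0 // ler0n.
  rewrite -(ler_nat real) !natrM natr_sum.
  have hq := predn_exp (p ^ d) e.
  have hq' : ((\sum_(i < e) (p ^ d) ^ i)%:R : real) * ((p ^ d)%:R - 1) = ((p ^ d) ^ e)%:R - 1.
    rewrite mulrC -(natrB _ (ltnW q1)) -natrM subn1 -hq -subn1 natrB //.
    by rewrite expn_gt0; lia.
  have ePe : ((p ^ e)%:R : real) * (p ^ (d * e - e))%:R = ((p ^ d) ^ e)%:R.
    by rewrite -natrM -expnD subnKC ?expnM // leq_pmull.
  have m1 : (1 : real) <= (p ^ (d * e - e))%:R by rewrite ler1n expn_gt0; lia.
  rewrite natrB ?expn_gt0 in hb; last by lia.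
  rewrite natrB in hk; last by lia.
  set m := ((p ^ (d * e - e))%:R : real) in ePe m1 *.
  set Pe := ((p ^ e)%:R : real) in hb ePe *.
  set Q := ((p ^ d)%:R : real) in hk hq' *.
  set Qe := (((p ^ d) ^ e)%:R : real) in hq' ePe *.
  set Sg := ((\sum_(i < e) (p ^ d) ^ i)%:R : real) in hq' *.
  rewrite -natr_sum -/Sg.
  have Q1 : 1 < Q by rewrite /Q ltr1n.

  have hK : (k%:R * Sg) = (Qe - 1) * alpha.
    have nz : Q - 1 != 0 by rewrite subr_eq0 gt_eqF.
    apply: (mulIf nz).
    by rewrite -mulrA hq' -hk; ring.
  rewrite hK.
  apply: (le_trans (ler_wpM2r (le_trans ler01 m1) hb)).
  rewrite -ePe.
  have : 0 <= (m - 1) * alpha by rewrite mulr_ge0 // subr_ge0.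
  set X := (m - 1) * alpha.
  have -> : (Pe - 1) * alpha * m = Pe * m * alpha - m * alpha by ring.
  have -> : (Pe * m - 1) * alpha = Pe * m * alpha - alpha by ring.
  rewrite /X; have -> : (m - 1) * alpha = m * alpha - alpha by ring.
  lra.
apply: ereal_sup_ubound; exists alpha => //.
Qed.
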